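(* Let $0<b<1$ and let $(G,\lambda)$ be a soft-hardcore model on $G=(V,E)$ that is $b$-marginally bounded. For every $v\in V$, let $\deg^{\mathrm{free}}_v$ be the number of neighbors $u$ of $v$ with $\lambda_u>0$. Then for every $v\in V$, $\deg^{\mathrm{free}}_v\le\frac{\ln b}{\ln(1-b)}$.
   Context: Hardcore model $(G,\lambda)$: weight $\prod_{v:\sigma_v=+1}\lambda_v$ for $\sigma\in\{-1,+1\}^V$ with $\{v:\sigma_v=+1\}$ independent, else $0$; Gibbs distribution $\mu$ is the normalized weight. Soft: $\lambda_v>0$ for all $v$. $b$-marginally bounded: for every $\Lambda\subseteq V$, feasible $\sigma\in\{\pm1\}^\Lambda$, $v\in V$, $c\in\{\pm1\}$, $\mu^\sigma_v(c)>0$ implies $\mu^\sigma_v(c)\ge b$. *)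

(* Defs.v *)
From mathcomp Require Import all_boot all_order all_algebra.
From mathcomp Require Import reals exp.
Set Implicit Arguments. Unset Strict Implicit. Unset Printing Implicit Defensive.
Import Order.TTheory GRing.Theory Num.Theory.
Local Open Scope ring_scope.

(* Spins: true = +1, false = -1.  Configurations are {ffun V -> bool}.
   The graph G = (V, E) is given by a relation e on a finite type V
   (assumed symmetric and irreflexive in the theorem). *)

Section Hardcore.
Variables (R : numDomainType) (V : finType) (e : rel V) (lam : V -> R).

Definition independent (S : {set V}) : bool :=
  [forall u, forall v, ((u \in S) && (v \in S)) ==> ~~ e u v].

Definition hc_weight (s : {ffun V -> bool}) : R :=
  if independent [set v | s v] then \prod_(v | s v) lam v else 0.

(* s agrees with the partial configuration t on Lam
   (a partial configuration sigma in {+-1}^Lam is represented by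
    any t : {ffun V -> bool}; only its values on Lam matter) *)
Definition agrees (Lam : {set V}) (t s : {ffun V -> bool}) : bool :=
  [forall v in Lam, s v == t v].

Definition feasible (Lam : {set V}) (t : {ffun V -> bool}) : Prop :=
  exists s : {ffun V -> bool}, agrees Lam t s /\ 0 < hc_weight s.

Definition cond_marginal (Lam : {set V}) (t : {ffun V -> bool}) (v : V) (c : bool) : R :=
  (\sum_(s | agrees Lam t s && (s v == c)) hc_weight s) /
  (\sum_(s | agrees Lam t s) hc_weight s).

Definition soft : Prop := forall v, 0 < lam v.

Definition marginally_bounded (b : R) : Prop :=
  forall (Lam : {set V}) (t : {ffun V -> bool}), feasible Lam t ->
  forall (v : V) (c : bool),
    0 < cond_marginal Lam t v c -> b <= cond_marginal Lam t v c.

Definition deg_free (v : V) : nat := #|[set u | e v u && (0 < lam u)]|.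

End Hardcore.

(* Main.v *)
Require Import Defs.
From mathcomp Require Import all_boot all_order all_algebra.
From mathcomp Require Import reals exp.
Import Order.TTheory GRing.Theory Num.Theory.
Local Open Scope ring_scope.

Theorem lemma6p5 (R : realType) (V : finType) (e : rel V)
  (e_sym : symmetric e) (e_irr : irreflexive e)
  (lam : V -> R) (b : R) (hb0 : 0 < b) (hb1 : b < 1)
  (hsoft : soft lam) (hmb : marginally_bounded e lam b) :
  forall v : V, (deg_free e lam v)%:R <= ln b / ln (1 - b).
Proof.
move=> v.
set t0 : {ffun V -> bool} := [ffun _ => false].
have wge0 : forall s, 0 <= hc_weight e lam s.
  move=> s; rewrite /hc_weight; case: ifP => // _.
  by apply: prodr_ge0 => u _; apply: ltW.
have w0 : hc_weight e lam t0 = 1.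
  rewrite /hc_weight; have -> : [set x | t0 x] = set0.
    by apply/setP => x; rewrite !inE ffunE.
  have -> : independent e set0.
    by apply/forallP => x; apply/forallP => y; rewrite !inE.
  by rewrite big_pred0 // => x; rewrite ffunE.
have wsing : forall u, hc_weight e lam [ffun x => x == u] = lam u.
  move=> u; rewrite /hc_weight; have -> : [set x | [ffun x => x == u] x] = [set u].
    by apply/setP => x; rewrite !inE ffunE.
  have -> : independent e [set u].
    apply/forallP => x; apply/forallP => y; rewrite !inE.
    by apply/implyP => /andP [/eqP -> /eqP ->]; rewrite e_irr.
  rewrite (big_pred1 u) // => x; by rewrite ffunE.
have wbad : forall (s : {ffun V -> bool}) u, s v -> s u -> e v u -> hc_weight e lam s = 0.
  move=> s u sv su evu; rewrite /hc_weight; case: ifP => // /forallP /(_ v)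
    /forallP /(_ u); by rewrite !inE sv su evu.
pose Z (A : {set V}) := \sum_(s | agrees A t0 s) hc_weight e lam s.
have feas : forall A, feasible e lam A t0.
  move=> A; exists t0; split; last by rewrite w0.
  by apply/forall_inP => x _.
have Zpos : forall A, 0 < Z A.
  move=> A; rewrite /Z (bigD1 t0) /=; last by apply/forall_inP.
  by rewrite w0 ltr_pwDl // sumr_ge0.
have step : forall (A : {set V}) (u : V), u \notin A -> Z (u |: A) <= (1 - b) * Z A.
  move=> A u uA.
  set nt := \sum_(s | agrees A t0 s && (s u == true)) hc_weight e lam s.
  have ntpos : 0 < nt.
    rewrite /nt (bigD1 [ffun x => x == u]) /=; last first.
      rewrite ffunE eqxx andbT; apply/forall_inP => x xA.
      rewrite !ffunE; apply/eqP; apply/negbTE; apply: contraNneq uA => <-.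
      by [].
    by rewrite wsing ltr_pwDl ?hsoft // sumr_ge0.
  have := hmb A t0 (feas A) u true.
  rewrite /cond_marginal -/nt -/(Z A) divr_gt0 // => /(_ isT).
  rewrite ler_pdivlMr // => hb.
  have -> : Z (u |: A) = Z A - nt.
    apply/eqP; rewrite eq_sym subr_eq; apply/eqP; rewrite addrC.
    rewrite /Z (bigID (fun s : {ffun V -> bool} => s u)) /=.
    congr (_ + _); apply: eq_bigl => s; first by rewrite eqb_id.
    apply/andP/forall_inP.
      move=> [/forall_inP H su] x; rewrite in_setU1 => /orP [/eqP -> | /H //].
      by rewrite ffunE; move: su; case: (s u).
    move=> H; split; first by apply/forall_inP => x xA; apply: H; rewrite in_setU1 xA orbT.
    by have := H u; rewrite in_setU1 eqxx ffunE /= => /(_ isT) /eqP ->.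
  by rewrite mulrBl mul1r lerD2l lerN2.
have ind : forall sq : seq V, uniq sq ->
    Z [set x in sq] <= (1 - b) ^+ size sq * Z set0.
  elim=> [|a sq IH] /=.
    by move=> _; rewrite expr0 mul1r (_ : [set x in [::]] = set0) //; apply/setP => x; rewrite !inE.
  move=> /andP [asq usq].
  have -> : [set x in a :: sq] = a |: [set x in sq].
    by apply/setP => x; rewrite !inE.
  apply: le_trans (step _ _ _) _; first by rewrite inE.
  rewrite exprS -mulrA ler_wpM2l ?IH // subr_ge0 ltW //.
set N := [set u | e v u && (0 < lam u)].
have ZN : Z N <= (1 - b) ^+ #|N| * Z set0.
  by rewrite -{1}(set_enum N) cardE; apply: ind; apply: enum_uniq.
have bZ : b * Z set0 <= Z N.
  have := hmb set0 t0 (feas set0) v true.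
  set nt := \sum_(s | agrees set0 t0 s && (s v == true)) hc_weight e lam s.
  have ntpos : 0 < nt.
    rewrite /nt (bigD1 [ffun x => x == v]) /=; last first.
      by rewrite ffunE eqxx andbT; apply/forall_inP => x; rewrite inE.
    by rewrite wsing ltr_pwDl ?hsoft // sumr_ge0.
  rewrite /cond_marginal -/nt -/(Z set0) divr_gt0 // => /(_ isT).
  rewrite ler_pdivlMr // => hb; apply: le_trans hb _.
  rewrite /nt /Z big_mkcond [X in _ <= X]big_mkcond /=; apply: ler_sum => s _.
  case: (boolP (agrees N t0 s)) => hN; first by case: ifP.
  case: ifP => // /andP [_ /eqP sv].
  move: hN; rewrite /agrees => /forall_inPn [u]; rewrite inE => /andP [evu _].
  rewrite ffunE eqbF_neg negbK => su.
  by rewrite (wbad s u).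
have bl : b <= (1 - b) ^+ #|N|.
  by rewrite -(ler_pM2r (Zpos set0)); apply: le_trans bZ ZN.
have hb' : 0 < 1 - b by rewrite subr_gt0.
have lnneg : ln (1 - b) < 0 by apply: ln_lt0; rewrite hb' /= gtrBl.
rewrite /deg_free -/N ler_ndivlMr // mulrC mulr_natr -lnXn //.
by rewrite ler_ln // posrE exprn_gt0.
Qed.
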